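(* Let $\mathfrak C$ be a monster model of a complete theory $T$. (i) Let $\pi(\bar x,\bar y)$ be a partial type without parameters and $\bar a,\bar b$ short tuples from $\mathfrak C$ corresponding to $\bar x,\bar y$. Then $A_{\pi,\bar a,\bar b}^{-1}=A_{\pi',\bar b,\bar a}$, where $\pi'(\bar y,\bar x):=\pi(\bar x,\bar y)$. (ii) Let $n\ge 2$ and let $\bar x,\bar y,\bar x_1,\dots,\bar x_n$ be pairwise disjoint short tuples of variables of the same length (and sorts). Then there is a partial type $\Phi_n(\bar x,\bar y,\bar x_1,\dots,\bar x_n)$ without parameters such that for all partial types $\pi_1(\bar x_1,\bar y),\dots,\pi_n(\bar x_n,\bar y)$ without parameters and every tuple $\bar a$ from $\mathfrak C$ corresponding to $\bar x$, we have $A_{\pi_1,\bar a}\cdots A_{\pi_n,\bar a}=A_{\pi,\bar a}$, where $\pi(\bar x,\bar y):=(\exists\bar x_1,\dots,\bar x_n)\big(\pi_1(\bar x_1,\bar y)\wedge\dots\wedge\pi_n(\bar x_n,\bar y)\wedge\Phi_n(\bar x,\bar y,\bar x_1,\dots,\bar x_n)\big)$.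
   Context: $\mathfrak C$ is $\kappa$-saturated and strongly $\kappa$-homogeneous ($\kappa$ large); short means of length $<\kappa$. For a partial type $\pi(\bar x,\bar y)$ without parameters and tuples $\bar a,\bar b$ from $\mathfrak C$ corresponding to $\bar x,\bar y$, $A_{\pi,\bar a,\bar b}=\{\sigma\in\mathrm{Aut}(\mathfrak C):\mathfrak C\models\pi(\sigma(\bar a),\bar b)\}$; when $\bar x,\bar y$ have the same length and sorts, $A_{\pi,\bar a}:=A_{\pi,\bar a,\bar a}$. Products and inverses of subsets of $\mathrm{Aut}(\mathfrak C)$ are taken in the group. *)

(* Defs.v *)
From Stdlib Require Import List.

Set Implicit Arguments.
Unset Strict Implicit.

Record signature := {
  sort : Type;
  fsym : Type;
  rsym : Type;
  farity : fsym -> list sort;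
  fsort : fsym -> sort;
  rarity : rsym -> list sort
}.

Fixpoint htuple (S : Type) (D : S -> Type) (l : list S) : Type :=
  match l with
  | nil => unit
  | s :: l' => (D s * htuple D l')%type
  end.

Fixpoint hmap (S : Type) (D : S -> Type) (g : forall s, D s -> D s)
  (l : list S) : htuple D l -> htuple D l :=
  match l return htuple D l -> htuple D l with
  | nil => fun u => u
  | s :: l' => fun p => (g s (fst p), @hmap S D g l' (snd p))
  end.

Record structure (L : signature) := {
  dom : sort L -> Type;
  funs : forall f : fsym L, htuple dom (farity f) -> dom (fsort f);
  rels : forall r : rsym L, htuple dom (rarity r) -> Prop
}.

Section Syntax.
Variable L : signature.

Definition ext (V : Type) (vs : V -> sort L) (s : sort L) (o : option V) : sort L :=
  match o with Some v => vs v | None => s end.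

Inductive term (V : Type) (vs : V -> sort L) : sort L -> Type :=
| tvar : forall x : V, term vs (vs x)
| tapp : forall f : fsym L, terms vs (farity f) -> term vs (fsort f)
with terms (V : Type) (vs : V -> sort L) : list (sort L) -> Type :=
| tnil : terms vs nil
| tcons : forall s l, term vs s -> terms vs l -> terms vs (s :: l).

Inductive formula (V : Type) (vs : V -> sort L) : Type :=
| feq : forall s, term vs s -> term vs s -> formula vs
| frel : forall r : rsym L, terms vs (rarity r) -> formula vs
| fneg : formula vs -> formula vs
| fand : formula vs -> formula vs -> formula vs
| fex : forall s : sort L, @formula (option V) (ext vs s) -> formula vs.

Definition ptype (V : Type) (vs : V -> sort L) := formula vs -> Prop.

Fixpoint rename_term (V W : Type) (vs : V -> sort L) (ws : W -> sort L)
  (f : V -> W) (H : forall v, ws (f v) = vs v) (s : sort L) (t : term vs s)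
  {struct t} : term ws s :=
  match t in term _ s0 return term ws s0 with
  | @tvar _ _ x => eq_rect _ (term ws) (@tvar W ws (f x)) _ (H x)
  | @tapp _ _ g ts => @tapp W ws g (rename_terms H ts)
  end
with rename_terms (V W : Type) (vs : V -> sort L) (ws : W -> sort L)
  (f : V -> W) (H : forall v, ws (f v) = vs v) (l : list (sort L))
  (ts : terms vs l) {struct ts} : terms ws l :=
  match ts in terms _ l0 return terms ws l0 with
  | @tnil _ _ => @tnil W ws
  | @tcons _ _ _ _ t ts' => tcons (rename_term H t) (rename_terms H ts')
  end.

Definition lift_ren (V W : Type) (vs : V -> sort L) (ws : W -> sort L)
  (f : V -> W) (H : forall v, ws (f v) = vs v) (s : sort L) :
  forall o : option V, ext ws s (option_map f o) = ext vs s o :=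
  fun o => match o return ext ws s (option_map f o) = ext vs s o with
           | Some v => H v
           | None => eq_refl
           end.

Fixpoint rename (V W : Type) (vs : V -> sort L) (ws : W -> sort L)
  (f : V -> W) (H : forall v, ws (f v) = vs v) (phi : formula vs)
  {struct phi} : formula ws :=
  match phi with
  | @feq _ _ _ t1 t2 => feq (rename_term H t1) (rename_term H t2)
  | @frel _ _ r ts => @frel W ws r (rename_terms H ts)
  | @fneg _ _ psi => fneg (rename H psi)
  | @fand _ _ psi chi => fand (rename H psi) (rename H chi)
  | @fex _ _ s psi => @fex W ws s (rename (lift_ren H s) psi)
  end.

(** variable sets for tuples of variables x̄ (left) and ȳ (right) *)
Definition sum_sort (I J : Type) (sI : I -> sort L) (sJ : J -> sort L)
  (v : I + J) : sort L :=
  match v with inl i => sI i | inr j => sJ j end.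

Definition swapv (I J : Type) (v : I + J) : J + I :=
  match v with inl i => inr i | inr j => inl j end.

Lemma swap_sort (I J : Type) (sI : I -> sort L) (sJ : J -> sort L) :
  forall v : I + J, sum_sort sJ sI (swapv v) = sum_sort sI sJ v.
Proof. intros v; destruct v; reflexivity. Qed.

Definition swap_ptype (I J : Type) (sI : I -> sort L) (sJ : J -> sort L)
  (pi : ptype (sum_sort sI sJ)) : ptype (sum_sort sJ sI) :=
  fun psi => exists phi, pi phi /\ psi = rename (swap_sort sI sJ) phi.

End Syntax.

Arguments tvar {L V} vs x.
Arguments tapp {L V} vs f _.
Arguments tnil {L V} vs.

Section Semantics.
Variable L : signature.
Variable M : structure L.

Fixpoint eval_term (V : Type) (vs : V -> sort L) (e : forall v, dom M (vs v))
  (s : sort L) (t : term vs s) {struct t} : dom M s :=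
  match t in term _ s0 return dom M s0 with
  | @tvar _ _ _ x => e x
  | @tapp _ _ _ f ts => @funs L M f (eval_terms e ts)
  end
with eval_terms (V : Type) (vs : V -> sort L) (e : forall v, dom M (vs v))
  (l : list (sort L)) (ts : terms vs l) {struct ts} : htuple (dom M) l :=
  match ts in terms _ l0 return htuple (dom M) l0 with
  | @tnil _ _ _ => tt
  | @tcons _ _ _ _ _ t ts' => (eval_term e t, eval_terms e ts')
  end.

Definition ext_env (V : Type) (vs : V -> sort L) (s : sort L)
  (e : forall v, dom M (vs v)) (d : dom M s) :
  forall o : option V, dom M (ext vs s o) :=
  fun o => match o return dom M (ext vs s o) with
           | Some v => e v
           | None => d
           end.

Fixpoint sat (V : Type) (vs : V -> sort L) (phi : formula vs) {struct phi} :
  (forall v, dom M (vs v)) -> Prop :=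
  match phi with
  | @feq _ _ _ _ t1 t2 => fun e => eval_term e t1 = eval_term e t2
  | @frel _ _ _ r ts => fun e => @rels L M r (eval_terms e ts)
  | @fneg _ _ _ psi => fun e => ~ sat psi e
  | @fand _ _ _ psi chi => fun e => sat psi e /\ sat chi e
  | @fex _ _ _ s psi => fun e => exists d : dom M s, sat psi (ext_env e d)
  end.

Definition sat_type (V : Type) (vs : V -> sort L) (pi : ptype vs)
  (e : forall v, dom M (vs v)) : Prop :=
  forall phi, pi phi -> sat phi e.

Definition tup (I : Type) (srt : I -> sort L) := forall i, dom M (srt i).

Definition pair_env (I J : Type) (sI : I -> sort L) (sJ : J -> sort L)
  (a : tup sI) (b : tup sJ) : forall v, dom M (sum_sort sI sJ v) :=
  fun v => match v return dom M (sum_sort sI sJ v) with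
           | inl i => a i
           | inr j => b j
           end.

Definition autfun := forall s : sort L, dom M s -> dom M s.

Definition is_aut (sigma : autfun) : Prop :=
  (forall s, exists g : dom M s -> dom M s,
       (forall x, g (sigma s x) = x) /\ (forall x, sigma s (g x) = x)) /\
  (forall f args, sigma (fsort f) (@funs L M f args) = @funs L M f (hmap sigma args)) /\
  (forall r args, @rels L M r (hmap sigma args) <-> @rels L M r args).

Definition aut_set := autfun -> Prop.

Definition set_eq (A B : aut_set) : Prop := forall sigma, A sigma <-> B sigma.

Definition inv_set (A : aut_set) : aut_set :=
  fun sigma => exists tau, A tau /\
    forall s x, sigma s (tau s x) = x /\ tau s (sigma s x) = x.

(* τ_0 ∘ τ_1 ∘ ... ∘ τ_{n-1} *)
Fixpoint comp_n (n : nat) (tau : nat -> autfun) : autfun :=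
  match n with
  | O => fun s x => x
  | S m => fun s x => @comp_n m tau s (tau m s x)
  end.

Definition prod_n (n : nat) (A : nat -> aut_set) : aut_set :=
  fun sigma => exists tau : nat -> autfun,
    (forall k, k < n -> A k (tau k)) /\
    forall s x, sigma s x = @comp_n n tau s x.

Definition apply_tup (sigma : autfun) (I : Type) (srt : I -> sort L)
  (a : tup srt) : tup srt := fun i => sigma (srt i) (a i).

Definition A_rel (I J : Type) (sI : I -> sort L) (sJ : J -> sort L)
  (R : tup sI -> tup sJ -> Prop) (a : tup sI) (b : tup sJ) : aut_set :=
  fun sigma => is_aut sigma /\ R (apply_tup sigma a) b.

Definition A_pi (I J : Type) (sI : I -> sort L) (sJ : J -> sort L)
  (pi : ptype (sum_sort sI sJ)) (a : tup sI) (b : tup sJ) : aut_set :=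
  A_rel (fun c d => sat_type pi (pair_env c d)) a b.

End Semantics.

Definition injective (A B : Type) (f : A -> B) := forall x y, f x = f y -> x = y.

Definition lt_card (A K : Type) : Prop :=
  (exists f : A -> K, injective f) /\ ~ (exists g : K -> A, injective g).

Definition saturated (L : signature) (K : Type) (M : structure L) : Prop :=
  forall (P : Type) (ps : P -> sort L) (p : forall j, dom M (ps j)),
  lt_card P K ->
  forall (s : sort L) (Sigma : formula (ext ps s) -> Prop),
  (forall l : list (formula (ext ps s)),
      (forall phi, In phi l -> Sigma phi) ->
      exists d : dom M s, forall phi, In phi l -> sat phi (ext_env p d)) ->
  exists d : dom M s, forall phi, Sigma phi -> sat phi (ext_env p d).

Definition strongly_homogeneous (L : signature) (K : Type) (M : structure L) : Prop :=
  forall (I : Type) (srt : I -> sort L) (a b : tup M srt),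
  lt_card I K ->
  (forall phi : formula srt, sat phi a <-> sat phi b) ->
  exists sigma : autfun M, is_aut sigma /\ forall i, sigma (srt i) (a i) = b i.

Definition monster (L : signature) (K : Type) (M : structure L) : Prop :=
  lt_card (nat + (sort L + (fsym L + rsym L))) K /\
  saturated K M /\ strongly_homogeneous K M.

(** * Variables for Φ_n(x̄, ȳ, x̄_1, ..., x̄_n) *)
Definition phi_var (I : Type) (n : nat) := ((I + I) + ({k : nat | k < n} * I))%type.

Definition phi_sort (L : signature) (I : Type) (srt : I -> sort L) (n : nat)
  (v : phi_var I n) : sort L :=
  match v with inl w => sum_sort srt srt w | inr p => srt (snd p) end.

Definition phi_env (L : signature) (M : structure L) (I : Type)
  (srt : I -> sort L) (n : nat) (c d : tup M srt)
  (e : {k : nat | k < n} -> tup M srt) : forall v, dom M (phi_sort srt v) :=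
  fun v => match v return dom M (phi_sort srt v) with
           | inl w => pair_env c d w
           | inr p => e (fst p) (snd p)
           end.

(* Main.v *)
Require Import Defs.
From Stdlib Require Import List Classical ClassicalEpsilon FunctionalExtensionality PropExtensionality ProofIrrelevance Eqdep Lia PeanoNat Compare_dec.
From mathcomp Require classical_sets.
Set Implicit Arguments.
Unset Strict Implicit.

Lemma zorn_sets (T : Type) (P : (T -> Prop) -> Prop) :
  (forall F : (T -> Prop) -> Prop, (forall X, F X -> P X) ->
     (forall X Y, F X -> F Y -> (forall t, X t -> Y t) \/ (forall t, Y t -> X t)) ->
     P (fun t => exists X, F X /\ X t)) ->
  exists A, P A /\ forall B, (forall t, A t -> B t) -> P B -> forall t, B t -> A t.
Proof.
  intros HF.
  destruct (@classical_sets.Zorn_bigcup T P) as [A [PA Amax]].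
  - intros F FP Ftot.
    assert (E : classical_sets.bigcup F (fun X => X) = (fun t => exists X, F X /\ X t)).
    { apply FunctionalExtensionality.functional_extensionality. intros t.
      apply PropExtensionality.propositional_extensionality. split.
      - intros [X H1 H2]. eauto.
      - intros [X [H1 H2]]. exists X; auto. }
    rewrite E. apply HF.
    + intros X HX. apply FP. exact HX.
    + intros X Y HX HY. destruct (Ftot X Y HX HY) as [H|H]; [left|right]; exact H.
  - exists A. split; auto. intros B AB PB t Bt.
    apply NNPP. intros Nt. apply (Amax B); auto.
    split.
    + exact AB.
    + intros BA. apply Nt. apply BA. exact Bt.
Qed.


Scheme term_mut := Induction for term Sort Prop
  with terms_mut := Induction for terms Sort Prop.

Section Sem.
Variable L : signature.
Variable M : structure L.

Definition pull (V W : Type) (vs : V -> sort L) (ws : W -> sort L) (f : V -> W)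
  (H : forall v, ws (f v) = vs v) (e : forall w, dom M (ws w)) : forall v, dom M (vs v) :=
  fun v => eq_rect _ (dom M) (e (f v)) _ (H v).

Lemma eval_term_cast (W : Type) (ws : W -> sort L) (e : forall w, dom M (ws w))
  s1 s2 (p : s1 = s2) (t : term ws s1) :
  eval_term e (eq_rect s1 (term ws) t s2 p) = eq_rect s1 (dom M) (eval_term e t) s2 p.
Proof. destruct p. reflexivity. Qed.

Lemma eval_rename_term (V W : Type) (vs : V -> sort L) (ws : W -> sort L) (f : V -> W)
  (H : forall v, ws (f v) = vs v) (e : forall w, dom M (ws w)) :
  forall s (t : term vs s), eval_term e (rename_term H t) = eval_term (pull H e) t.
Proof.
  apply (@term_mut L _ vs (fun s t => eval_term e (rename_term H t) = eval_term (pull H e) t)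
                  (fun l ts => eval_terms e (rename_terms H ts) = eval_terms (pull H e) ts)).
  - intros x. simpl. rewrite eval_term_cast. reflexivity.
  - intros g ts IH. simpl. rewrite IH. reflexivity.
  - reflexivity.
  - intros s l t IHt ts IHts. simpl. rewrite IHt, IHts. reflexivity.
Qed.

Lemma eval_rename_terms (V W : Type) (vs : V -> sort L) (ws : W -> sort L) (f : V -> W)
  (H : forall v, ws (f v) = vs v) (e : forall w, dom M (ws w)) :
  forall l (ts : terms vs l), eval_terms e (rename_terms H ts) = eval_terms (pull H e) ts.
Proof.
  apply (@terms_mut L _ vs (fun s t => eval_term e (rename_term H t) = eval_term (pull H e) t)
                  (fun l ts => eval_terms e (rename_terms H ts) = eval_terms (pull H e) ts)).
  - intros x. simpl. rewrite eval_term_cast. reflexivity.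
  - intros g ts IH. simpl. rewrite IH. reflexivity.
  - reflexivity.
  - intros s l t IHt ts IHts. simpl. rewrite IHt, IHts. reflexivity.
Qed.

Lemma sat_rename (V : Type) (vs : V -> sort L) (phi : formula vs) :
  forall (W : Type) (ws : W -> sort L) (f : V -> W) (H : forall v, ws (f v) = vs v)
    (e : forall w, dom M (ws w)),
  sat (rename H phi) e <-> sat phi (pull H e).
Proof.
  induction phi as [V vs s t1 t2|V vs r ts|V vs psi IH|V vs psi IH chi IH2|V vs s psi IH];
    intros W ws f H e; simpl.
  - rewrite !eval_rename_term. tauto.
  - rewrite eval_rename_terms. tauto.
  - rewrite IH. tauto.
  - rewrite IH, IH2. tauto.
  - split; intros [d Hd]; exists d.
    + apply IH in Hd. replace (ext_env (pull H e) d) with (pull (lift_ren H s) (ext_env e d)); auto.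
      apply functional_extensionality_dep. intros [v|]; reflexivity.
    + apply IH. replace (pull (lift_ren H s) (ext_env e d)) with (ext_env (pull H e) d); auto.
      apply functional_extensionality_dep. intros [v|]; reflexivity.
Qed.

Lemma hmap_ext (g1 g2 : forall s, dom M s -> dom M s) :
  (forall s x, g1 s x = g2 s x) -> forall l (t : htuple (dom M) l), hmap g1 t = hmap g2 t.
Proof.
  intros Hg l. induction l as [|s l IH]; simpl; intros t.
  - reflexivity.
  - destruct t as [x t]. simpl. rewrite Hg, IH. reflexivity.
Qed.

Definition aenv (sigma : autfun M) (V : Type) (vs : V -> sort L) (e : forall v, dom M (vs v)) :
  forall v, dom M (vs v) := fun v => sigma (vs v) (e v).

Lemma eval_aut_term (sigma : autfun M) (Hs : is_aut sigma) (V : Type) (vs : V -> sort L)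
  (e : forall v, dom M (vs v)) :
  forall s (t : term vs s), eval_term (aenv sigma e) t = sigma s (eval_term e t).
Proof.
  destruct Hs as [_ [Hf _]].
  apply (@term_mut L _ vs (fun s t => eval_term (aenv sigma e) t = sigma s (eval_term e t))
                  (fun l ts => eval_terms (aenv sigma e) ts = hmap sigma (eval_terms e ts))).
  - intros x. reflexivity.
  - intros g ts IH. simpl. rewrite IH, Hf. reflexivity.
  - reflexivity.
  - intros s l t IHt ts IHts. simpl. rewrite IHt, IHts. reflexivity.
Qed.

Lemma eval_aut_terms (sigma : autfun M) (Hs : is_aut sigma) (V : Type) (vs : V -> sort L)
  (e : forall v, dom M (vs v)) :
  forall l (ts : terms vs l), eval_terms (aenv sigma e) ts = hmap sigma (eval_terms e ts).
Proof.
  destruct Hs as [_ [Hf _]].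
  apply (@terms_mut L _ vs (fun s t => eval_term (aenv sigma e) t = sigma s (eval_term e t))
                  (fun l ts => eval_terms (aenv sigma e) ts = hmap sigma (eval_terms e ts))).
  - intros x. reflexivity.
  - intros g ts IH. simpl. rewrite IH, Hf. reflexivity.
  - reflexivity.
  - intros s l t IHt ts IHts. simpl. rewrite IHt, IHts. reflexivity.
Qed.

Lemma sat_aut (sigma : autfun M) (Hs : is_aut sigma) (V : Type) (vs : V -> sort L)
  (phi : formula vs) : forall e, sat phi (aenv sigma e) <-> sat phi e.
Proof.
  induction phi as [V vs s t1 t2|V vs r ts|V vs psi IH|V vs psi IH chi IH2|V vs s psi IH];
    intros e; simpl.
  - rewrite !eval_aut_term by exact Hs. destruct Hs as [Hb _].
    destruct (Hb s) as [g [Hg1 Hg2]]. split; intros E.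
    + rewrite <- (Hg1 (eval_term e t1)), <- (Hg1 (eval_term e t2)), E. reflexivity.
    + rewrite E. reflexivity.
  - rewrite eval_aut_terms by exact Hs. destruct Hs as [_ [_ Hr]]. apply Hr.
  - rewrite IH. tauto.
  - rewrite IH, IH2. tauto.
  - destruct Hs as [Hb Hrest]. destruct (Hb s) as [g [Hg1 Hg2]].
    split; intros [d Hd].
    + exists (g d). apply IH.
      replace (aenv sigma (ext_env e (g d))) with (ext_env (aenv sigma e) d); auto.
      apply functional_extensionality_dep. intros [v|]; [reflexivity|].
      unfold aenv; simpl. rewrite Hg2. reflexivity.
    + exists (sigma s d).
      replace (ext_env (aenv sigma e) (sigma s d)) with (aenv sigma (ext_env e d)).
      * apply IH; auto.
      * apply functional_extensionality_dep. intros [v|]; reflexivity.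
Qed.

Lemma term_support (V : Type) (vs : V -> sort L) :
  forall s (t : term vs s), exists F : list V, forall e e' : forall v, dom M (vs v),
    (forall v, In v F -> e v = e' v) -> eval_term e t = eval_term e' t.
Proof.
  apply (@term_mut L _ vs (fun s t => exists F : list V, forall e e' : forall v, dom M (vs v),
    (forall v, In v F -> e v = e' v) -> eval_term e t = eval_term e' t)
    (fun l ts => exists F : list V, forall e e' : forall v, dom M (vs v),
    (forall v, In v F -> e v = e' v) -> eval_terms e ts = eval_terms e' ts)).
  - intros x. exists (x :: nil). intros e e' He. simpl. apply He. left; auto.
  - intros g ts [F HF]. exists F. intros e e' He. simpl. rewrite (HF e e' He). reflexivity.
  - exists nil. reflexivity.
  - intros s l t [F1 H1] ts [F2 H2]. exists (F1 ++ F2). intros e e' He. simpl.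
    rewrite (H1 e e'), (H2 e e'); auto; intros v Hv; apply He; apply in_or_app; auto.
Qed.

Lemma terms_support (V : Type) (vs : V -> sort L) :
  forall l (ts : terms vs l), exists F : list V, forall e e' : forall v, dom M (vs v),
    (forall v, In v F -> e v = e' v) -> eval_terms e ts = eval_terms e' ts.
Proof.
  apply (@terms_mut L _ vs (fun s t => exists F : list V, forall e e' : forall v, dom M (vs v),
    (forall v, In v F -> e v = e' v) -> eval_term e t = eval_term e' t)
    (fun l ts => exists F : list V, forall e e' : forall v, dom M (vs v),
    (forall v, In v F -> e v = e' v) -> eval_terms e ts = eval_terms e' ts)).
  - intros x. exists (x :: nil). intros e e' He. simpl. apply He. left; auto.
  - intros g ts [F HF]. exists F. intros e e' He. simpl. rewrite (HF e e' He). reflexivity.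
  - exists nil. reflexivity.
  - intros s l t [F1 H1] ts [F2 H2]. exists (F1 ++ F2). intros e e' He. simpl.
    rewrite (H1 e e'), (H2 e e'); auto; intros v Hv; apply He; apply in_or_app; auto.
Qed.

Fixpoint unsome (V : Type) (l : list (option V)) : list V :=
  match l with
  | nil => nil
  | Some v :: l' => v :: unsome l'
  | None :: l' => unsome l'
  end.

Lemma in_unsome (V : Type) (l : list (option V)) v : In (Some v) l -> In v (unsome l).
Proof.
  induction l as [|[w|] l IH]; simpl; auto.
  intros [E|E]; [left; congruence|right; auto].
  intros [E|E]; [discriminate|auto].
Qed.

Lemma sat_support (V : Type) (vs : V -> sort L) (phi : formula vs) :
  exists F : list V, forall e e' : forall v, dom M (vs v),
    (forall v, In v F -> e v = e' v) -> (sat phi e <-> sat phi e').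
Proof.
  induction phi as [V vs s t1 t2|V vs r ts|V vs psi IH|V vs psi IH chi IH2|V vs s psi IH].
  - destruct (term_support t1) as [F1 H1]. destruct (term_support t2) as [F2 H2].
    exists (F1 ++ F2). intros e e' He. simpl.
    rewrite (H1 e e'), (H2 e e'); try tauto; intros v Hv; apply He; apply in_or_app; auto.
  - destruct (terms_support ts) as [F HF]. exists F. intros e e' He. simpl.
    rewrite (HF e e' He). tauto.
  - destruct IH as [F HF]. exists F. intros e e' He. simpl. rewrite (HF e e' He). tauto.
  - destruct IH as [F1 H1]. destruct IH2 as [F2 H2].
    exists (F1 ++ F2). intros e e' He. simpl.
    rewrite (H1 e e'), (H2 e e'); try tauto; intros v Hv; apply He; apply in_or_app; auto.
  - destruct IH as [F HF]. exists (unsome F). intros e e' He. simpl.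
    split; intros [d Hd]; exists d; (eapply HF; [|exact Hd]);
      intros [v|] Hv; simpl; auto; [symmetry|]; apply He; apply in_unsome; auto.
Qed.

End Sem.

Section Aut.
Variable L : signature.
Variable M : structure L.

Lemma hmap_comp (g1 g2 : forall s, dom M s -> dom M s) l (t : htuple (dom M) l) :
  hmap g1 (hmap g2 t) = hmap (fun s x => g1 s (g2 s x)) t.
Proof.
  induction l as [|s l IH]; simpl.
  - reflexivity.
  - destruct t as [x t]. simpl. rewrite IH. reflexivity.
Qed.

Lemma hmap_id l (t : htuple (dom M) l) : hmap (fun s x => x) t = t.
Proof.
  induction l as [|s l IH]; simpl.
  - destruct t; reflexivity.
  - destruct t as [x t]. simpl. rewrite IH. reflexivity.
Qed.

Definition compf (sigma tau : autfun M) : autfun M := fun s x => sigma s (tau s x).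
Definition idf : autfun M := fun s x => x.

Lemma is_aut_id : is_aut idf.
Proof.
  split; [|split].
  - intros s. exists (fun x => x). split; reflexivity.
  - intros f args. unfold idf. rewrite hmap_id. reflexivity.
  - intros r args. unfold idf. rewrite hmap_id. tauto.
Qed.

Lemma is_aut_comp (sigma tau : autfun M) : is_aut sigma -> is_aut tau -> is_aut (compf sigma tau).
Proof.
  intros [Hb1 [Hf1 Hr1]] [Hb2 [Hf2 Hr2]]. split; [|split].
  - intros s. destruct (Hb1 s) as [g1 [A1 B1]]. destruct (Hb2 s) as [g2 [A2 B2]].
    exists (fun x => g2 (g1 x)). unfold compf. split; intros x.
    + rewrite A1, A2. reflexivity.
    + rewrite B2, B1. reflexivity.
  - intros f args. unfold compf. rewrite Hf2, Hf1, hmap_comp. reflexivity.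
  - intros r args. unfold compf. rewrite <- hmap_comp, Hr1, Hr2. tauto.
Qed.

Lemma is_aut_ext (sigma tau : autfun M) : (forall s x, sigma s x = tau s x) -> is_aut sigma -> is_aut tau.
Proof.
  intros E Hs. replace tau with sigma; auto.
  apply functional_extensionality_dep; intros s; apply functional_extensionality; auto.
Qed.

Lemma is_aut_inv (sigma g : autfun M) : is_aut sigma -> (forall s x, g s (sigma s x) = x) ->
  (forall s x, sigma s (g s x) = x) -> is_aut g.
Proof.
  intros [Hb [Hf Hr]] A B. split; [|split].
  - intros s. exists (sigma s). split; auto.
  - intros f args. rewrite <- (A _ (@funs L M f (hmap g args))). rewrite Hf, hmap_comp.
    rewrite (hmap_ext (g2 := fun s x => x)) by auto. rewrite hmap_id. reflexivity.
  - intros r args. rewrite <- (Hr _ (hmap g args)), hmap_comp.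
    rewrite (hmap_ext (g2 := fun s x => x)) by auto. rewrite hmap_id. tauto.
Qed.

Lemma aut_inv_ex (sigma : autfun M) : is_aut sigma -> exists g : autfun M,
  is_aut g /\ (forall s x, g s (sigma s x) = x) /\ (forall s x, sigma s (g s x) = x).
Proof.
  intros Hs. pose proof Hs as [Hb _].
  exists (fun s => proj1_sig (constructive_indefinite_description _ (Hb s))).
  assert (A : forall s x, proj1_sig (constructive_indefinite_description _ (Hb s)) (sigma s x) = x).
  { intros s x. destruct (constructive_indefinite_description _ (Hb s)) as [g [A B]]. simpl; auto. }
  assert (B : forall s x, sigma s (proj1_sig (constructive_indefinite_description _ (Hb s)) x) = x).
  { intros s x. destruct (constructive_indefinite_description _ (Hb s)) as [g [A' B]]. simpl; auto. }
  split; [|split]; auto. eapply is_aut_inv; eauto.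
Qed.

Definition upd (V : Type) (vs : V -> sort L) (e : forall v, dom M (vs v)) (v0 : V)
  (d : dom M (vs v0)) : forall v, dom M (vs v) :=
  fun v => match excluded_middle_informative (v0 = v) with
           | left p => eq_rect v0 (fun w => dom M (vs w)) d v p
           | right _ => e v
           end.
Arguments upd [V vs] e v0 d v.

Lemma upd_eq (V : Type) (vs : V -> sort L) (e : forall v, dom M (vs v)) v0 d :
  upd e v0 d v0 = d.
Proof.
  unfold upd. destruct (excluded_middle_informative (v0 = v0)) as [p|n].
  - rewrite (proof_irrelevance _ p eq_refl). reflexivity.
  - exfalso; auto.
Qed.

Lemma upd_neq (V : Type) (vs : V -> sort L) (e : forall v, dom M (vs v)) v0 d v :
  v0 <> v -> upd e v0 d v = e v.
Proof.
  unfold upd. destruct (excluded_middle_informative (v0 = v)) as [p|n]; tauto.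
Qed.

Definition exmap (V : Type) (v0 : V) (v : V) : option V :=
  match excluded_middle_informative (v0 = v) with
  | left _ => None
  | right _ => Some v
  end.

Definition exmap_sort (V : Type) (vs : V -> sort L) (v0 : V) :
  forall v, ext vs (vs v0) (exmap v0 v) = vs v :=
  fun v => match excluded_middle_informative (v0 = v) as d
     return ext vs (vs v0) (match d with left _ => None | right _ => Some v end) = vs v with
  | left p => f_equal vs p
  | right _ => eq_refl
  end.

Definition ex_var (V : Type) (vs : V -> sort L) (v0 : V) (phi : formula vs) : formula vs :=
  fex (rename (exmap_sort vs v0) phi).

Lemma sat_ex_var (V : Type) (vs : V -> sort L) (v0 : V) (phi : formula vs) e :
  sat (M:=M) (ex_var v0 phi) e <-> exists d, sat phi (upd e v0 d).
Proof.
  unfold ex_var. simpl.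
  assert (E : forall d, pull (exmap_sort vs v0) (ext_env e d) = upd e v0 d).
  { intros d. apply functional_extensionality_dep. intros v.
    unfold pull, upd, exmap_sort, exmap.
    destruct (excluded_middle_informative (v0 = v)) as [p|n].
    - destruct p. reflexivity.
    - reflexivity. }
  split; intros [d Hd]; exists d.
  - apply sat_rename in Hd. rewrite E in Hd. exact Hd.
  - apply sat_rename. rewrite E. exact Hd.
Qed.

Definition ex_vars (V : Type) (vs : V -> sort L) (l : list V) (phi : formula vs) : formula vs :=
  fold_right (@ex_var V vs) phi l.

Lemma sat_ex_vars (V : Type) (vs : V -> sort L) (l : list V) (phi : formula vs) :
  forall e, sat (M:=M) (ex_vars l phi) e <->
    exists e', (forall v, ~ In v l -> e' v = e v) /\ sat phi e'.
Proof.
  induction l as [|v0 l IH]; intros e.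
  - simpl. split.
    + intros H. exists e. auto.
    + intros [e' [E H]]. replace e with e'; auto.
      apply functional_extensionality_dep; intros v; apply E; auto.
  - change (ex_vars (v0 :: l) phi) with (ex_var v0 (ex_vars l phi)).
    rewrite sat_ex_var. split.
    + intros [d Hd]. apply IH in Hd. destruct Hd as [e' [E H]]. exists e'. split; auto.
      intros v Hv. rewrite E by (intro; apply Hv; right; auto). apply upd_neq. intros ->. apply Hv; left; auto.
    + intros [e' [E H]]. exists (e' v0). apply IH. exists e'. split; auto.
      intros v Hv. destruct (excluded_middle_informative (v0 = v)) as [->|n].
      * rewrite upd_eq. reflexivity.
      * rewrite upd_neq by auto. apply E. intros [C|C]; auto.
Qed.

End Aut.
Arguments upd [L M V vs] e v0 d v.

Section Conn.
Variable L : signature.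
Definition fiff (V : Type) (vs : V -> sort L) (p q : formula vs) : formula vs :=
  fand (fneg (fand p (fneg q))) (fneg (fand q (fneg p))).
Lemma sat_fiff (M : structure L) (V : Type) (vs : V -> sort L) (p q : formula vs) e :
  sat (M:=M) (fiff p q) e <-> (sat p e <-> sat q e).
Proof. simpl. tauto. Qed.
Definition fconj (V : Type) (vs : V -> sort L) (p : formula vs) (l : list (formula vs)) : formula vs :=
  fold_right (@fand L V vs) p l.
Lemma sat_fconj (M : structure L) (V : Type) (vs : V -> sort L) (p : formula vs) l e :
  sat (M:=M) (fconj p l) e <-> (sat p e /\ forall q, In q l -> sat q e).
Proof.
  induction l as [|q l IH]; simpl.
  - firstorder.
  - rewrite IH. firstorder congruence.
Qed.
End Conn.

Section PartI.
Variable L : signature.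
Variable M : structure L.

Lemma pull_swap (I J : Type) (sI : I -> sort L) (sJ : J -> sort L) (c : tup M sJ) (d : tup M sI) :
  pull (swap_sort sI sJ) (pair_env c d) = pair_env d c.
Proof.
  apply functional_extensionality_dep. intros [i|j]; unfold pull; simpl.
  - generalize (swap_sort sI sJ (inl i)). simpl. intros p.
    rewrite (proof_irrelevance _ p eq_refl). reflexivity.
  - generalize (swap_sort sI sJ (inr j)). simpl. intros p.
    rewrite (proof_irrelevance _ p eq_refl). reflexivity.
Qed.

Lemma aenv_pair (sigma : autfun M) (I J : Type) (sI : I -> sort L) (sJ : J -> sort L)
  (c : tup M sI) (d : tup M sJ) :
  aenv sigma (pair_env c d) = pair_env (apply_tup sigma c) (apply_tup sigma d).
Proof. apply functional_extensionality_dep. intros [i|j]; reflexivity. Qed.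

Lemma apply_tup_inv (sigma tau : autfun M) (I : Type) (srt : I -> sort L) (c : tup M srt) :
  (forall s x, tau s (sigma s x) = x) -> apply_tup tau (apply_tup sigma c) = c.
Proof. intros H. apply functional_extensionality_dep. intros i. unfold apply_tup. auto. Qed.

Lemma part_i (I J : Type) (sI : I -> sort L) (sJ : J -> sort L)
     (pi : ptype (sum_sort sI sJ)) (a : tup M sI) (b : tup M sJ) :
     set_eq (inv_set (A_pi pi a b)) (A_pi (swap_ptype pi) b a).
Proof.
  intros sigma. split.
  - intros [tau [[Ht Hpi] Hinv]].
    assert (Hs : is_aut sigma).
    { apply (is_aut_inv (sigma := tau)); auto; intros s x; apply Hinv. }
    split; auto.
    intros psi [phi [Hphi ->]]. apply sat_rename. rewrite pull_swap.
    apply (sat_aut Ht). rewrite aenv_pair.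
    rewrite (apply_tup_inv (sigma := sigma) (tau := tau)) by (intros; apply Hinv).
    apply Hpi; auto.
  - intros [Hs Hpi]. destruct (aut_inv_ex Hs) as [g [Hg [A B]]].
    exists g. split; [split|].
    + auto.
    + intros phi Hphi.
      assert (H1 : sat (M:=M) (rename (swap_sort sI sJ) phi) (pair_env (apply_tup sigma b) a)).
      { apply Hpi. exists phi. auto. }
      apply sat_rename in H1. rewrite pull_swap in H1.
      apply (sat_aut Hg) in H1. rewrite aenv_pair in H1.
      rewrite (apply_tup_inv (sigma := sigma) (tau := g)) in H1 by auto. exact H1.
    + intros s x. auto.
Qed.
End PartI.

Lemma choose_fun (A B : Type) (R : A -> B -> Prop) : (forall x, exists y, R x y) ->
  exists f : A -> B, forall x, R x (f x).
Proof.
  intros H. exists (fun x => proj1_sig (constructive_indefinite_description _ (H x))).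
  intros x. exact (proj2_sig (constructive_indefinite_description _ (H x))).
Qed.

Lemma fin_or_inf (X : Type) :
  (exists f : nat -> X, injective f) \/ (exists l : list X, forall x, In x l).
Proof.
  destruct (classic (exists l : list X, forall x, In x l)) as [H|H]; [right; auto|left].
  assert (H' : forall l : list X, exists x, ~ In x l).
  { intros l. apply NNPP. intros C. apply H. exists l. intros x. apply NNPP. intros D. apply C. eauto. }
  destruct (choose_fun H') as [g Hg].
  set (s := fix s (n : nat) : list X := match n with O => nil | S m => g (s m) :: s m end).
  exists (fun n => g (s n)).
  assert (Hin : forall n m, n < m -> In (g (s n)) (s m)).
  { intros n m Hnm. induction m as [|m IH]; [lia|].
    simpl. destruct (Nat.eq_dec n m) as [->|Hne]; [left; auto|right; apply IH; lia]. }
  intros n m E. destruct (Nat.lt_total n m) as [Hl|[Hl|Hl]]; auto.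
  - exfalso. apply (Hg (s m)). rewrite <- E. apply Hin; auto.
  - exfalso. apply (Hg (s n)). rewrite E. apply Hin; auto.
Qed.

Lemma no_inj_nat_fin (X : Type) (l : list X) : (forall x, In x l) ->
  ~ exists f : nat -> X, injective f.
Proof.
  intros Hl [f Hf].
  assert (ND : NoDup (map f (seq 0 (S (length l))))).
  { apply NoDup_map_NoDup_ForallPairs; [intros a b _ _; apply Hf|apply seq_NoDup]. }
  pose proof (NoDup_incl_length ND (l' := l)) as C.
  rewrite length_map, length_seq in C. assert (S (length l) <= length l); [apply C|lia].
  intros x _; auto.
Qed.

Lemma fin_index (X : Type) (l : list X) : exists f : X -> nat,
  forall x, In x l -> nth_error l (f x) = Some x.
Proof.
  apply (choose_fun (R := fun x n => In x l -> nth_error l n = Some x)). intros x. destruct (classic (In x l)) as [H|H].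
  - destruct (In_nth_error _ _ H) as [n Hn]. exists n. auto.
  - exists 0. tauto.
Qed.

Lemma fin_inj_nat (X : Type) (l : list X) : (forall x, In x l) ->
  exists f : X -> nat, injective f.
Proof.
  intros Hl. destruct (fin_index l) as [f Hf]. exists f. intros x y E.
  pose proof (Hf x (Hl x)) as A. rewrite E, Hf in A by auto. congruence.
Qed.

Definition tagb (I : Type) (x : I + I) : nat := match x with inl _ => 0 | inr _ => 1 end.
Definition baseb (I : Type) (x : I + I) : I := match x with inl i => i | inr i => i end.

Lemma sum_self (I : Type) : (exists f : nat -> I, injective f) ->
  exists g : I + I -> I, injective g.
Proof.
  intros Hinf.
  set (DL := fun (G : (I + I) * I -> Prop) i => exists y, G (inl i, y)).
  set (P := fun G : (I + I) * I -> Prop =>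
    (forall x y y', G (x, y) -> G (x, y') -> y = y') /\
    (forall x x' y, G (x, y) -> G (x', y) -> x = x') /\
    (forall i, DL G i <-> exists y, G (inr i, y)) /\
    (forall x y, G (x, y) -> DL G y)).
  destruct (@zorn_sets _ P) as [G0 [PG0 Gmax]].
  { intros F FP Ftot. unfold P. split; [|split; [|split]].
    - intros x y y' [X [FX HX]] [Y [FY HY]].
      destruct (Ftot X Y FX FY) as [S|S]; [apply S in HX|apply S in HY].
      + apply (proj1 (FP Y FY) x y y'); auto.
      + apply (proj1 (FP X FX) x y y'); auto.
    - intros x x' y [X [FX HX]] [Y [FY HY]].
      destruct (Ftot X Y FX FY) as [S|S]; [apply S in HX|apply S in HY].
      + apply (proj1 (proj2 (FP Y FY)) x x' y); auto.
      + apply (proj1 (proj2 (FP X FX)) x x' y); auto.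
    - intros i. split.
      + intros [y [X [FX HX]]]. destruct (proj1 (proj1 (proj2 (proj2 (FP X FX))) i) (ex_intro _ y HX)) as [y' Hy'].
        exists y'. exists X. auto.
      + intros [y [X [FX HX]]]. destruct (proj2 (proj1 (proj2 (proj2 (FP X FX))) i) (ex_intro _ y HX)) as [y' Hy'].
        exists y'. exists X. auto.
    - intros x y [X [FX HX]]. destruct (proj2 (proj2 (proj2 (FP X FX))) x y HX) as [y' Hy'].
      exists y'. exists X. auto. }
  destruct PG0 as [Gfun [Ginj [Gdom Grng]]].
  set (D := DL G0).
  assert (DinG : forall x y, G0 (x, y) -> D (baseb x)).
  { intros [i|i] y H; simpl. exists y; auto. apply Gdom. exists y; auto. }
  assert (Cfin : exists l : list {i : I | ~ D i}, forall x, In x l).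
  { destruct (fin_or_inf {i : I | ~ D i}) as [[h Hh]|H]; auto. exfalso.
    set (h' := fun n => proj1_sig (h n)).
    assert (Hh' : injective h').
    { intros n m E. apply Hh. apply eq_sig_hprop; auto. }
    assert (HnD : forall n, ~ D (h' n)). { intros n. exact (proj2_sig (h n)). }
    set (G1 := fun p : (I + I) * I => G0 p \/ exists n,
       p = (inl (h' n), h' (2 * n)) \/ p = (inr (h' n), h' (2 * n + 1))).
    assert (NG : forall n y, ~ G0 (inl (h' n), y)).
    { intros n y Hy. apply (HnD n). exact (DinG _ _ Hy). }
    assert (NG' : forall n y, ~ G0 (inr (h' n), y)).
    { intros n y Hy. apply (HnD n). exact (DinG _ _ Hy). }
    assert (NGr : forall x n, ~ G0 (x, h' n)).
    { intros x n Hy. apply (HnD n). exact (Grng _ _ Hy). }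
    assert (PG1 : P G1).
    { unfold P. split; [|split; [|split]].
      - intros x y y' A B.
        destruct A as [A|[n HA]]; destruct B as [B|[k HB]].
        + eauto.
        + exfalso. assert (Dx : D (baseb x)) by (eapply DinG; eauto).
          destruct HB as [HB|HB]; injection HB; intros; subst; simpl in Dx; eapply HnD; eauto.
        + exfalso. assert (Dx : D (baseb x)) by (eapply DinG; eauto).
          destruct HA as [HA|HA]; injection HA; intros; subst; simpl in Dx; eapply HnD; eauto.
        + destruct HA as [HA|HA]; destruct HB as [HB|HB]; injection HA as Ex Ey; injection HB as Ex' Ey';
            rewrite Ex in Ex'; try discriminate; injection Ex' as Ek; apply Hh' in Ek; subst; reflexivity.
      - intros x x' y A B.
        destruct A as [A|[n HA]]; destruct B as [B|[k HB]].
        + eauto.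
        + exfalso. assert (Dy : D y) by (eapply Grng; eauto).
          destruct HB as [HB|HB]; injection HB; intros; subst; eapply HnD; eauto.
        + exfalso. assert (Dy : D y) by (eapply Grng; eauto).
          destruct HA as [HA|HA]; injection HA; intros; subst; eapply HnD; eauto.
        + destruct HA as [HA|HA]; destruct HB as [HB|HB]; injection HA as Ex Ey; injection HB as Ex' Ey';
            rewrite Ey in Ey'; apply Hh' in Ey'; subst; try (assert (n = k) by lia; subst; reflexivity); lia.
      - intros i. split.
        + intros [y [A|[n [A|A]]]].
          * destruct (proj1 (Gdom i) (ex_intro _ y A)) as [y' Hy']. exists y'. left; auto.
          * injection A; intros; subst. exists (h' (2 * n + 1)). right. exists n. right; auto.
          * discriminate.
        + intros [y [A|[n [A|A]]]].
          * destruct (proj2 (Gdom i) (ex_intro _ y A)) as [y' Hy']. exists y'. left; auto.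
          * discriminate.
          * injection A; intros; subst. exists (h' (2 * n)). right. exists n. left; auto.
      - intros x y [A|[n [A|A]]].
        + destruct (Grng _ _ A) as [y' Hy']. exists y'. left; auto.
        + injection A; intros; subst. exists (h' (2 * (2 * n))). right. exists (2 * n). left; auto.
        + injection A; intros; subst. exists (h' (2 * (2 * n + 1))). right. exists (2 * n + 1). left; auto. }
    assert (S : forall t, G1 t -> G0 t).
    { apply (Gmax G1); auto. intros t Ht; left; auto. }
    apply (NG 0 (h' 0)). apply S. right. exists 0. left. reflexivity. }
  destruct Cfin as [F HF].
  set (FI := map (@proj1_sig _ _) F).
  assert (HFI : forall i, ~ D i -> In i FI).
  { intros i Hi. unfold FI. change i with (proj1_sig (exist (fun i => ~ D i) i Hi)). apply in_map. auto. }
  assert (Dinf : exists h : nat -> {i : I | D i}, injective h).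
  { destruct (fin_or_inf {i : I | D i}) as [H|[l Hl]]; auto. exfalso.
    apply (no_inj_nat_fin (l := map (@proj1_sig _ _) l ++ FI)); auto.
    intros i. apply in_or_app. destruct (classic (D i)) as [Di|Di].
    - left. change i with (proj1_sig (exist (fun i => D i) i Di)). apply in_map. auto.
    - right. auto. }
  destruct Dinf as [h Hh].
  set (h' := fun n => proj1_sig (h n)).
  assert (Hh' : injective h').
  { intros n m E. apply Hh. apply eq_sig_hprop; auto. }
  destruct (fin_index FI) as [idx Hidx].
  set (m := length FI).
  assert (Hidxm : forall i, ~ D i -> idx i < m).
  { intros i Hi. apply nth_error_Some. rewrite Hidx; auto. discriminate. }
  set (shiftR := fun y z : I => (exists k, y = h' k /\ z = h' (k + 2 * m)) \/
                                 ((forall k, y <> h' k) /\ z = y)).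
  set (R := fun (x : I + I) (z : I) =>
     (D (baseb x) /\ exists y, G0 (x, y) /\ shiftR y z) \/
     (~ D (baseb x) /\ z = h' (2 * idx (baseb x) + tagb x))).
  assert (Rtot : forall x, exists z, R x z).
  { intros x. destruct (classic (D (baseb x))) as [Dx|Dx].
    - assert (Ey : exists y, G0 (x, y)).
      { destruct x as [i|i]; simpl in Dx. exact Dx. apply Gdom. exact Dx. }
      destruct Ey as [y Hy].
      destruct (classic (exists k, y = h' k)) as [[k Hk]|Hk].
      + exists (h' (k + 2 * m)). left. split; auto. exists y. split; auto. left. eauto.
      + exists y. left. split; auto. exists y. split; auto. right. split; auto.
        intros k E. apply Hk. eauto.
    - exists (h' (2 * idx (baseb x) + tagb x)). right. auto. }
  destruct (choose_fun Rtot) as [g Hg].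
  exists g. intros x x' E.
  pose proof (Hg x) as A. pose proof (Hg x') as B. rewrite <- E in B. clear E.
  destruct A as [[Dx [y [Gy Sy]]]|[Dx Ex]]; destruct B as [[Dx' [y' [Gy' Sy']]]|[Dx' Ex']].
  - assert (y = y').
    { destruct Sy as [[k [-> Ek]]|[Nk Ek]]; destruct Sy' as [[k' [-> Ek']]|[Nk' Ek']].
      - rewrite Ek in Ek'. apply Hh' in Ek'. f_equal. lia.
      - exfalso. apply (Nk' (k + 2 * m)). congruence.
      - exfalso. apply (Nk (k' + 2 * m)). congruence.
      - congruence. }
    subst y'. apply (Ginj x x' y); auto.
  - exfalso. pose proof (Hidxm _ Dx').
    destruct Sy as [[k [-> Ek]]|[Nk Ek]].
    + rewrite Ek in Ex'. apply Hh' in Ex'. destruct x'; simpl in *; lia.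
    + apply (Nk (2 * idx (baseb x') + tagb x')). congruence.
  - exfalso. pose proof (Hidxm _ Dx).
    destruct Sy' as [[k [-> Ek]]|[Nk Ek]].
    + rewrite Ek in Ex. apply Hh' in Ex. destruct x; simpl in *; lia.
    + apply (Nk (2 * idx (baseb x) + tagb x)). congruence.
  - rewrite Ex in Ex'. apply Hh' in Ex'.
    assert (T1 : tagb x = tagb x' /\ idx (baseb x) = idx (baseb x')).
    { destruct x, x'; simpl in *; lia. }
    destruct T1 as [T1 T2].
    assert (Eb : baseb x = baseb x').
    { pose proof (Hidx _ (HFI _ Dx)) as U. pose proof (Hidx _ (HFI _ Dx')) as U'.
      rewrite T2 in U. congruence. }
    destruct x, x'; simpl in *; try discriminate; congruence.
Qed.

Lemma inj_comp (A B C : Type) (f : A -> B) (g : B -> C) : injective f -> injective g ->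
  injective (fun x => g (f x)).
Proof. intros Hf Hg x y E. apply Hf, Hg, E. Qed.

Lemma lt_card_inj (A B K : Type) : (exists f : A -> B, injective f) -> lt_card B K -> lt_card A K.
Proof.
  intros [f Hf] [[g Hg] N]. split.
  - exists (fun x => g (f x)). apply inj_comp; auto.
  - intros [h Hh]. apply N. exists (fun x => f (h x)). apply inj_comp; auto.
Qed.

Lemma lt_card_sum (I K : Type) : lt_card nat K -> lt_card I K -> lt_card (I + I) K.
Proof.
  intros [[fn Hfn] Nn] [[f Hf] N]. destruct (fin_or_inf I) as [Hinf|[l Hl]].
  - destruct (sum_self Hinf) as [g Hg]. split.
    + exists (fun x => f (g x)). apply inj_comp; auto.
    + intros [h Hh]. apply N. exists (fun x => g (h x)). apply inj_comp; auto.
  - assert (Hl2 : forall x : I + I, In x (map inl l ++ map inr l)).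
    { intros [i|i]; apply in_or_app; [left|right]; apply in_map; auto. }
    split.
    + destruct (fin_inj_nat Hl2) as [g Hg]. exists (fun x => fn (g x)). apply inj_comp; auto.
    + intros [h Hh]. apply (no_inj_nat_fin Hl2). exists (fun n => h (fn n)). apply inj_comp; auto.
Qed.

Lemma lt_card_sum2 (A B I K : Type) : lt_card nat K -> lt_card I K ->
  (exists f : A -> I, injective f) -> (exists g : B -> I, injective g) -> lt_card (A + B) K.
Proof.
  intros Hn HI [f Hf] [g Hg]. apply (lt_card_inj (B := I + I)); [|apply lt_card_sum; auto].
  exists (fun x => match x with inl a => inl (f a) | inr b => inr (g b) end).
  intros [a|b] [a'|b'] E; try discriminate; injection E; intros E'; f_equal; auto.
Qed.

Section Real.
Variable L : signature.
Variable M : structure L.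
Variable K : Type.
Hypothesis Hsat : saturated K M.

Variables (P W : Type) (ps : P -> sort L) (ws : W -> sort L) (p : forall j, dom M (ps j)).
Hypothesis HPW : lt_card (P + W) K.
Variable Sigma : formula (sum_sort ps ws) -> Prop.
Hypothesis Hfin : forall l, (forall phi, In phi l -> Sigma phi) ->
  exists w : tup M ws, forall phi, In phi l -> sat phi (pair_env p w).

Definition Tpair := {j : W & dom M (ws j)}.
Definition functional (G : Tpair -> Prop) :=
  forall j d d', G (existT _ j d) -> G (existT _ j d') -> d = d'.
Definition good (G : Tpair -> Prop) :=
  functional G /\ forall l (J0 : list W), (forall phi, In phi l -> Sigma phi) ->
    exists w : tup M ws, (forall j d, In j J0 -> G (existT _ j d) -> w j = d) /\
      (forall phi, In phi l -> sat phi (pair_env p w)).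

Lemma good_empty : good (fun _ => False).
Proof.
  split.
  - intros j d d' [].
  - intros l J0 Hl. destruct (Hfin Hl) as [w Hw]. exists w. split; auto. intros j d _ [].
Qed.

Lemma chain_good (F : (Tpair -> Prop) -> Prop) : (forall X, F X -> good X) ->
  (forall X Y, F X -> F Y -> (forall t, X t -> Y t) \/ (forall t, Y t -> X t)) ->
  good (fun t => exists X, F X /\ X t).
Proof.
  intros FG Ftot. set (U := fun t => exists X, F X /\ X t).
  assert (Ufun : functional U).
  { intros j d d' [X [FX HX]] [Y [FY HY]].
    destruct (Ftot X Y FX FY) as [S|S]; [apply S in HX|apply S in HY].
    - apply (proj1 (FG Y FY) j); auto.
    - apply (proj1 (FG X FX) j); auto. }
  split; auto.
  intros l J0 Hl.
  assert (HX : exists X, (F X \/ (forall t, ~ X t)) /\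
             forall j d, In j J0 -> U (existT _ j d) -> X (existT _ j d)).
  { induction J0 as [|i J1 IH].
    - exists (fun _ => False). split; [right; auto|]. intros j d [].
    - destruct IH as [X1 [HX1 A1]].
      destruct (classic (exists d, U (existT _ i d))) as [[d [Y [FY HY]]]|Nd].
      + assert (Z : exists Z, F Z /\ (forall t, X1 t -> Z t) /\ (forall t, Y t -> Z t)).
        { destruct HX1 as [FX1|EX1].
          - destruct (Ftot X1 Y FX1 FY) as [S|S].
            + exists Y. auto.
            + exists X1. auto.
          - exists Y. split; auto. split; auto. intros t Ht. exfalso. eapply EX1; eauto. }
        destruct Z as [Z [FZ [S1 S2]]]. exists Z. split; [left; auto|].
        intros j d' [Ej|Hj] Ud'.
        * subst j. assert (d' = d) by (apply (Ufun i); auto; exists Y; auto). subst. auto.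
        * apply S1. apply A1; auto.
      + exists X1. split; auto. intros j d' [Ej|Hj] Ud'.
        * subst j. exfalso. apply Nd. eauto.
        * apply A1; auto. }
  destruct HX as [X [HX A]].
  assert (GX : good X).
  { destruct HX as [FX|EX]; [apply FG; auto|].
    split.
    - intros j d d' H. exfalso. eapply EX; eauto.
    - intros l' J0' Hl'. destruct (Hfin Hl') as [w Hw]. exists w. split; auto.
      intros j d _ H. exfalso. eapply EX; eauto. }
  destruct (proj2 GX l J0 Hl) as [w [Aw Sw]]. exists w. split; auto.
Qed.

Definition wvars (F : list (P + W)) : list W :=
  flat_map (fun v => match v with inr j => j :: nil | inl _ => nil end) F.

Lemma in_wvars F j : In (inr j) F -> In j (wvars F).
Proof.
  intros H. unfold wvars. apply in_flat_map. exists (inr j). simpl. auto.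
Qed.

Definition tmap (i : W) (v : P + W) : option (P + W) :=
  match v with
  | inl j => Some (inl j)
  | inr j => match excluded_middle_informative (i = j) with
             | left _ => None
             | right _ => Some (inr j)
             end
  end.

Definition tmap_sort (i : W) : forall v,
  ext (sum_sort ps ws) (ws i) (tmap i v) = sum_sort ps ws v :=
  fun v => match v return ext (sum_sort ps ws) (ws i) (tmap i v) = sum_sort ps ws v with
  | inl j => eq_refl
  | inr j => match excluded_middle_informative (i = j) as dd
       return ext (sum_sort ps ws) (ws i)
                (match dd with left _ => None | right _ => Some (inr j) end) = ws j with
       | left pr => f_equal ws pr
       | right _ => eq_refl
       end
  end.

Definition trans (i : W) (phi : formula (sum_sort ps ws)) : formula (ext (sum_sort ps ws) (ws i)) :=
  rename (tmap_sort i) phi.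

Lemma sat_trans (i : W) phi (w : tup M ws) d :
  sat (trans i phi) (ext_env (pair_env p w) d) <-> sat phi (pair_env p (upd w i d)).
Proof.
  unfold trans. rewrite sat_rename.
  replace (pull (tmap_sort i) (ext_env (pair_env p w) d)) with (pair_env p (upd w i d)); [tauto|].
  apply functional_extensionality_dep. intros [j|j]; [reflexivity|].
  unfold pull, upd, tmap_sort, tmap; simpl.
  destruct (excluded_middle_informative (i = j)) as [pr|n].
  - destruct pr. reflexivity.
  - reflexivity.
Qed.

Lemma realize : exists w : tup M ws, forall phi, Sigma phi -> sat phi (pair_env p w).
Proof.
  destruct (Hfin (l := nil)) as [w0 _]; [intros _ []|].
  destruct (@zorn_sets Tpair good) as [G0 [GG0 Gmax]].
  { intros F FG Ftot. apply chain_good; auto. }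
  set (wG := fun j => match excluded_middle_informative (exists d, G0 (existT _ j d)) with
                      | left H => proj1_sig (constructive_indefinite_description _ H)
                      | right _ => w0 j end).
  assert (HwG : forall j d, G0 (existT _ j d) -> wG j = d).
  { intros j d H. unfold wG. destruct (excluded_middle_informative (exists d, G0 (existT _ j d))) as [E|E].
    - destruct (constructive_indefinite_description _ E) as [d' Hd']. simpl.
      apply (proj1 GG0 j); auto.
    - exfalso; eauto. }
  assert (Tot : forall i, exists d, G0 (existT _ i d)).
  { intros i. apply NNPP. intros Ni.
    set (Lsel := fun F : list (P + W) => flat_map (fun v => match v with
        | inr j => match excluded_middle_informative (j <> i /\ ~ exists d, G0 (existT _ j d)) with
                   | left _ => j :: nil | right _ => nil end
        | inl _ => nil end) F).
    assert (HLsel : forall F j, In j (Lsel F) <-> In (inr j) F /\ j <> i /\ ~ exists d, G0 (existT _ j d)).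
    { intros F j. unfold Lsel. rewrite in_flat_map. split.
      - intros [[k|k] [Hk Hj]]; [destruct Hj|].
        destruct (excluded_middle_informative (k <> i /\ ~ (exists d, G0 (existT _ k d)))) as [A|A].
        + destruct Hj as [<-|[]]. auto.
        + destruct Hj.
      - intros [Hj A]. exists (inr j). split; auto.
        destruct (excluded_middle_informative (j <> i /\ ~ (exists d, G0 (existT _ j d)))) as [B|B].
        + left; auto.
        + tauto. }
    set (Sig' := fun psi => exists phi l F, Sigma phi /\ (forall chi, In chi l -> Sigma chi) /\
        (forall e e' : forall v, dom M (sum_sort ps ws v), (forall v, In v F -> e v = e' v) ->
             (sat (fconj phi l) e <-> sat (fconj phi l) e')) /\
        psi = trans i (ex_vars (map inr (Lsel F)) (fconj phi l))).
    assert (Key : forall psi, Sig' psi -> exists lb JB, (forall chi, In chi lb -> Sigma chi) /\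
        forall w : tup M ws, (forall chi, In chi lb -> sat chi (pair_env p w)) ->
          (forall j, In j JB -> (exists d, G0 (existT _ j d)) -> w j = wG j) ->
          sat psi (ext_env (pair_env p wG) (w i))).
    { intros psi [phi [l [F [Sphi [Sl [HF ->]]]]]].
      exists (phi :: l), (wvars F). split.
      - intros chi [<-|H]; auto.
      - intros w Sw Aw. apply sat_trans. apply sat_ex_vars.
        set (w' := fun j => match excluded_middle_informative (In j (Lsel F)) with
                            | left _ => w j | right _ => upd wG i (w i) j end).
        exists (pair_env p w'). split.
        + intros [j|j] Hj; [reflexivity|]. simpl. unfold w'.
          destruct (excluded_middle_informative (In j (Lsel F))) as [A|A]; auto.
          exfalso. apply Hj. apply in_map. auto.
        + refine (proj1 (HF (pair_env p w) (pair_env p w') _) _).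
          2: apply sat_fconj; split; [apply Sw; left; auto|]; intros chi Hc; apply Sw; right; auto.
          intros [j|j] Hj; [reflexivity|]. simpl. unfold w'.
          destruct (excluded_middle_informative (In j (Lsel F))) as [A|A]; auto.
          destruct (excluded_middle_informative (i = j)) as [<-|B].
          -- rewrite upd_eq. reflexivity.
          -- rewrite upd_neq by auto. apply Aw.
             ++ apply in_wvars; auto.
             ++ apply NNPP. intros C. apply A. apply HLsel. split; auto. }
    assert (Sfin : forall l', (forall psi, In psi l' -> Sig' psi) ->
        exists d, forall psi, In psi l' -> sat psi (ext_env (pair_env p wG) d)).
    { intros l' Hl'.
      assert (Comb : exists lb JB, (forall chi, In chi lb -> Sigma chi) /\
        forall w : tup M ws, (forall chi, In chi lb -> sat chi (pair_env p w)) ->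
          (forall j, In j JB -> (exists d, G0 (existT _ j d)) -> w j = wG j) ->
          forall psi, In psi l' -> sat psi (ext_env (pair_env p wG) (w i))).
      { induction l' as [|psi l' IH].
        - exists nil, nil. split; [intros _ []|]. intros w _ _ psi [].
        - destruct IH as [lb [JB [S1 S2]]]; [intros; apply Hl'; right; auto|].
          destruct (Key psi) as [lb' [JB' [S1' S2']]]; [apply Hl'; left; auto|].
          exists (lb ++ lb'), (JB ++ JB'). split.
          + intros chi Hc. apply in_app_or in Hc. destruct Hc; auto.
          + intros w Sw Aw psi' [<-|Hp].
            * apply S2'; [intros; apply Sw; apply in_or_app; auto|intros; apply Aw; auto; apply in_or_app; auto].
            * apply S2; auto; [intros; apply Sw; apply in_or_app; auto|intros; apply Aw; auto; apply in_or_app; auto]. }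
      destruct Comb as [lb [JB [S1 S2]]].
      destruct (proj2 GG0 lb JB S1) as [w [Aw Sw]].
      exists (w i). apply S2; auto.
      intros j Hj [d Hd]. rewrite (Aw j d Hj Hd). symmetry. apply HwG; auto. }
    destruct (Hsat HPW Sfin) as [d Hd].
    set (G1 := fun t => G0 t \/ t = existT _ i d).
    assert (GG1 : good G1).
    { split.
      - intros j e e' [A|A] [B|B].
        + apply (proj1 GG0 j); auto.
        + exfalso. injection B; intros _ <-. apply Ni. eauto.
        + exfalso. injection A; intros _ <-. apply Ni. eauto.
        + injection A; intros E1 <-. apply inj_pair2 in E1.
          injection B; intros E2. apply inj_pair2 in E2. congruence.
      - intros l J0 Hl. destruct l as [|phi l].
        + exists (upd wG i d). split; [|intros _ []].
          intros j e _ [A|A].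
          * rewrite upd_neq. apply HwG; auto. intros <-. apply Ni; eauto.
          * injection A; intros E1 <-. apply inj_pair2 in E1. subst. apply upd_eq.
        + destruct (sat_support M (fconj phi l)) as [F HF].
          assert (Spsi : Sig' (trans i (ex_vars (map inr (Lsel F)) (fconj phi l)))).
          { exists phi, l, F. split; [apply Hl; left; auto|]. split; [intros; apply Hl; right; auto|].
            split; auto. }
          apply Hd in Spsi. apply sat_trans in Spsi. apply sat_ex_vars in Spsi.
          destruct Spsi as [e' [E' Se']].
          set (w := fun j => e' (inr j) : dom M (ws j)).
          assert (Ee : e' = pair_env p w).
          { apply functional_extensionality_dep. intros [j|j]; [|reflexivity].
            rewrite E'; [reflexivity|]. intros C. apply in_map_iff in C. destruct C as [x [C _]]. discriminate. }
          rewrite Ee in Se'. apply sat_fconj in Se'. destruct Se' as [S0 Sl].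
          exists w. split.
          * intros j e _ [A|A].
            -- unfold w. rewrite E'.
               ++ simpl. rewrite upd_neq; [apply HwG; auto|]. intros <-. apply Ni; eauto.
               ++ intros C. apply in_map_iff in C. destruct C as [x [C1 C2]]. injection C1; intros ->.
                  apply HLsel in C2. apply C2. eauto.
            -- assert (j = i) by (injection A; auto). subst j. apply inj_pair2 in A. subst e.
               unfold w. rewrite E'.
               ++ simpl. apply upd_eq.
               ++ intros C. apply in_map_iff in C. destruct C as [x [C1 C2]]. injection C1; intros ->.
                  apply HLsel in C2. tauto.
          * intros chi [<-|Hc]; auto. }
    assert (S : forall t, G1 t -> G0 t) by (apply Gmax; auto; intros t Ht; left; auto).
    apply Ni. exists d. apply S. right. reflexivity. }
  exists wG. intros phi Sphi.
  destruct (sat_support M phi) as [F HF].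
  destruct (proj2 GG0 (phi :: nil) (wvars F)) as [w [Aw Sw]].
  { intros chi [<-|[]]; auto. }
  refine (proj1 (HF (pair_env p w) (pair_env p wG) _) _).
  2: apply Sw; left; auto.
  intros [j|j] Hj; [reflexivity|]. simpl. destruct (Tot j) as [d Hd].
  rewrite (Aw j d (in_wvars Hj) Hd). symmetry. apply HwG; auto.
Qed.

End Real.

Section PartII.
Variable L : signature.
Variable n : nat.
Variable I : Type.
Variable srt : I -> sort L.

Definition PV := phi_var I n.
Definition ps : PV -> sort L := phi_sort srt (n:=n).
Definition Wv := ({k : nat | k < n} * I)%type.
Definition ws : Wv -> sort L := fun w => srt (snd w).
Definition VV := (PV + Wv)%type.
Definition vsV : VV -> sort L := sum_sort ps ws.

Definition xv (i : I) : PV := inl (inl i).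
Definition yv (i : I) : PV := inl (inr i).

Definition pt (k : nat) (i : I) : VV :=
  match k with
  | O => inl (yv i)
  | S _ => match lt_dec k n with
           | left H => inr (exist _ k H, i)
           | right _ => inl (xv i)
           end
  end.

Lemma pt_sort k i : vsV (pt k i) = srt i.
Proof. destruct k; [reflexivity|]. simpl. destruct (lt_dec (S k) n); reflexivity. Qed.

Definition fpt (k : nat) (v : I + I) : VV :=
  match v with inl i => pt (S k) i | inr i => pt k i end.
Definition Hpt (k : nat) : forall v, vsV (fpt k v) = sum_sort srt srt v :=
  fun v => match v with inl i => pt_sort (S k) i | inr i => pt_sort k i end.

Definition fxk (kk : {k : nat | k < n}) (v : I + I) : VV :=
  match v with inl i => inl (inr (kk, i)) | inr i => inl (yv i) end.
Definition Hxk (kk : {k : nat | k < n}) : forall v, vsV (fxk kk v) = sum_sort srt srt v :=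
  fun v => match v with inl i => eq_refl | inr i => eq_refl end.

Definition Sig (chi : formula vsV) : Prop :=
  exists (kk : {k : nat | k < n}) (phi : formula (sum_sort srt srt)),
    chi = fiff (rename (Hpt (proj1_sig kk)) phi) (rename (Hxk kk) phi).

Definition collapse (v : VV) : PV :=
  match v with inl u => u | inr w => yv (snd w) end.
Definition Hcol : forall v, ps (collapse v) = vsV v :=
  fun v => match v with inl u => eq_refl | inr w => eq_refl end.

Variable M : structure L.

Definition Phi : ptype ps :=
  fun psi => exists phi l F, Sig phi /\ (forall chi, In chi l -> Sig chi) /\
    (forall (e e' : forall v, dom M (vsV v)), (forall v, In v F -> e v = e' v) ->
       (sat (fconj phi l) e <-> sat (fconj phi l) e')) /\
    psi = rename Hcol (ex_vars (map inr (wvars F)) (fconj phi l)).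

Definition yfill (p : forall u, dom M (ps u)) : tup M ws := fun w => p (yv (snd w)).

Lemma pull_col (p : forall u, dom M (ps u)) : pull Hcol p = pair_env p (yfill p).
Proof. apply functional_extensionality_dep. intros [u|w]; reflexivity. Qed.

Definition chain (E : forall v, dom M (vsV v)) (k : nat) : tup M srt :=
  fun i => eq_rect _ (dom M) (E (pt k i)) _ (pt_sort k i).

Lemma pull_pt E k : pull (Hpt k) E = pair_env (chain E (S k)) (chain E k).
Proof. apply functional_extensionality_dep. intros [i|i]; reflexivity. Qed.

Lemma pull_xk (p : forall u, dom M (ps u)) (w : tup M ws) kk :
  pull (Hxk kk) (pair_env p w) = pair_env (fun i => p (inr (kk, i))) (fun i => p (yv i)).
Proof. apply functional_extensionality_dep. intros [i|i]; reflexivity. Qed.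

Lemma chain0 p w i : chain (pair_env p w) 0 i = p (yv i).
Proof.
  unfold chain. generalize (pt_sort 0 i). simpl. intros pr.
  rewrite (proof_irrelevance _ pr eq_refl). reflexivity.
Qed.

Lemma chain_ge p w k i : n <= k -> 0 < k -> chain (pair_env p w) k i = p (xv i).
Proof.
  intros H1 H2. unfold chain. generalize (pt_sort k i). destruct k as [|k]; [lia|]. simpl.
  destruct (lt_dec (S k) n) as [H|H]; [lia|]. simpl. intros pr.
  rewrite (proof_irrelevance _ pr eq_refl). reflexivity.
Qed.

Lemma chain_mid p w k (H : k < n) i : 0 < k -> chain (pair_env p w) k i = w (exist _ k H, i).
Proof.
  intros Hk. unfold chain. generalize (pt_sort k i). destruct k as [|k]; [lia|]. simpl.
  destruct (lt_dec (S k) n) as [H'|H']; [|lia]. simpl. intros pr.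
  rewrite (proof_irrelevance _ pr eq_refl). rewrite (proof_irrelevance _ H' H). reflexivity.
Qed.

Lemma sat_Sig_iff p w kk phi :
  sat (fiff (rename (Hpt (proj1_sig kk)) phi) (rename (Hxk kk) phi)) (pair_env p w) <->
  (sat phi (pair_env (chain (pair_env p w) (S (proj1_sig kk))) (chain (pair_env p w) (proj1_sig kk))) <->
   sat phi (pair_env (fun i => p (inr (kk, i))) (fun i => p (yv i)))).
Proof.
  rewrite sat_fiff, !sat_rename, pull_pt, pull_xk. tauto.
Qed.

Lemma Phi_back (p : forall u, dom M (ps u)) : sat_type Phi p ->
  forall l, (forall chi, In chi l -> Sig chi) ->
  exists w : tup M ws, forall chi, In chi l -> sat chi (pair_env p w).
Proof.
  intros HP [|phi l] Hl.
  - exists (yfill p). intros _ [].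
  - destruct (sat_support M (fconj phi l)) as [F HF].
    assert (Hpsi : Phi (rename Hcol (ex_vars (map inr (wvars F)) (fconj phi l)))).
    { exists phi, l, F. split; [apply Hl; left; auto|]. split; [intros; apply Hl; right; auto|].
      split; auto. }
    apply HP in Hpsi. apply sat_rename in Hpsi. rewrite pull_col in Hpsi.
    apply sat_ex_vars in Hpsi. destruct Hpsi as [e' [E' Se']].
    set (w := fun x => e' (inr x) : dom M (ws x)).
    assert (Ee : e' = pair_env p w).
    { apply functional_extensionality_dep. intros [u|x]; [|reflexivity].
      rewrite E'; [reflexivity|]. intros C. apply in_map_iff in C. destruct C as [z [C _]]. discriminate. }
    rewrite Ee in Se'. apply sat_fconj in Se'. destruct Se' as [S0 Sl].
    exists w. intros chi [<-|Hc]; auto.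
Qed.

Lemma Phi_forth (p : forall u, dom M (ps u)) (wc : tup M ws) :
  (forall chi, Sig chi -> sat chi (pair_env p wc)) -> sat_type Phi p.
Proof.
  intros Hc psi [phi [l [F [S1 [S2 [HF ->]]]]]].
  apply sat_rename. rewrite pull_col. apply sat_ex_vars.
  set (w'' := fun x => match excluded_middle_informative (In x (wvars F)) with
                       | left _ => wc x | right _ => yfill p x end).
  exists (pair_env p w''). split.
  - intros [u|x] Hv; [reflexivity|]. simpl. unfold w''.
    destruct (excluded_middle_informative (In x (wvars F))) as [A|A]; auto.
    exfalso. apply Hv. apply in_map. auto.
  - refine (proj1 (HF (pair_env p wc) (pair_env p w'') _) _).
    2: apply sat_fconj; split; auto.
    intros [u|x] Hv; [reflexivity|]. simpl. unfold w''.
    destruct (excluded_middle_informative (In x (wvars F))) as [A|A]; auto.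
    exfalso. apply A. apply in_wvars. auto.
Qed.

Definition Hinr : forall i, sum_sort srt srt (inr i) = srt i := fun i => eq_refl.

Lemma sat_inr (phi0 : formula srt) (u v : tup M srt) :
  sat (rename (f := @inr I I) Hinr phi0) (pair_env u v) <-> sat phi0 v.
Proof.
  rewrite sat_rename. replace (pull Hinr (pair_env u v)) with v; [tauto|].
  apply functional_extensionality_dep. intros i. reflexivity.
Qed.

Lemma comp_n_aut (tau : nat -> autfun M) k : (forall j, j < k -> is_aut (tau j)) -> is_aut (comp_n k tau).
Proof.
  induction k as [|k IH]; intros H.
  - apply is_aut_id.
  - change (comp_n (S k) tau) with (compf (comp_n k tau) (tau k)).
    apply is_aut_comp; auto.
Qed.

End PartII.

Lemma lt_card_X (I K : Type) : lt_card nat K -> lt_card I K ->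
  forall m, lt_card ({k : nat | k < S m} * I) K.
Proof.
  intros Hn HI. induction m as [|m IH].
  - apply (lt_card_inj (B := I)); auto. exists (fun x => snd x).
    intros [[k Hk] i] [[k' Hk'] i'] E. simpl in E. subst i'.
    assert (k = k') by lia. subst k'. rewrite (proof_irrelevance _ Hk Hk'). reflexivity.
  - apply (lt_card_inj (B := (({k : nat | k < S m} * I) + ({k : nat | k < S m} * I))%type)).
    2: apply lt_card_sum; auto.
    assert (H0 : 0 < S m) by lia.
    exists (fun x => match lt_dec (proj1_sig (fst x)) (S m) with
                     | left H => inl (exist _ (proj1_sig (fst x)) H, snd x)
                     | right _ => inr (exist _ 0 H0, snd x) end).
    intros [[k Hk] i] [[k' Hk'] i'] E. simpl in E.
    destruct (lt_dec k (S m)) as [A|A]; destruct (lt_dec k' (S m)) as [B|B];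
      try discriminate; injection E; intros; subst.
    + rewrite (proof_irrelevance _ Hk Hk'). reflexivity.
    + assert (k = k') by lia. subst k'. rewrite (proof_irrelevance _ Hk Hk'). reflexivity.
Qed.

Lemma card_PVW (I K : Type) n : 2 <= n -> lt_card nat K -> lt_card I K -> lt_card (PV n I + Wv n I) K.
Proof.
  intros Hn HN HI. destruct n as [|[|m]]; [lia|lia|].
  set (X := ({k : nat | k < S (S m)} * I)%type).
  assert (HX : lt_card X K) by (apply lt_card_X; auto).
  apply (lt_card_inj (B := ((X + X) + (X + X))%type)).
  2: apply lt_card_sum; auto; apply lt_card_sum; auto.
  assert (H0 : 0 < S (S m)) by lia. assert (H1 : 1 < S (S m)) by lia.
  exists (fun v : PV (S (S m)) I + Wv (S (S m)) I => match v with
    | inl (inl (inl i)) => inl (inl (exist _ 0 H0, i))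
    | inl (inl (inr i)) => inl (inl (exist _ 1 H1, i))
    | inl (inr x) => inl (inr x)
    | inr x => inr (inl x) end).
  intros [[[i|i]|x]|x] [[[i'|i']|x']|x'] E; try discriminate; injection E; intros; subst; auto.
Qed.

Section Main.
Variable L : signature.
Variable K : Type.
Variable M : structure L.
Hypothesis HM : monster K M.

Lemma part_ii : forall n : nat, 2 <= n ->
   forall (I : Type) (srt : I -> sort L), lt_card I K ->
   exists Phi0 : ptype (phi_sort srt (n:=n)),
   forall (pis : nat -> ptype (sum_sort srt srt)) (a : tup M srt),
     set_eq (prod_n n (fun k => A_pi (pis k) a a))
       (A_rel (fun c d =>
                 exists e : {k : nat | k < n} -> tup M srt,
                   (forall k, sat_type (pis (proj1_sig k)) (pair_env (e k) d)) /\
                   sat_type Phi0 (phi_env c d e))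
              a a).
Proof.
  intros n Hn I srt HI.
  destruct HM as [HL [Hsat Hhom]].
  assert (HN : lt_card nat K).
  { apply (lt_card_inj (B := (nat + (sort L + (fsym L + rsym L)))%type)); auto.
    exists inl. intros x y E. injection E; auto. }
  exists (Phi (n:=n) (srt:=srt) M).
  intros pis a sigma. split.
  -
    intros [tau [Htau Hsig]].
    assert (Hs : is_aut sigma).
    { apply (is_aut_ext (sigma := comp_n n tau)).
      - intros s x. symmetry. apply Hsig.
      - apply comp_n_aut. intros j Hj. apply (Htau j Hj). }
    split; auto.
    exists (fun kk => apply_tup (tau (proj1_sig kk)) a). split.
    + intros [k Hk]. simpl. exact (proj2 (Htau k Hk)).
    + set (p := phi_env (apply_tup sigma a) a (fun kk => apply_tup (tau (proj1_sig kk)) a)).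
      set (wc := fun x : Wv n I => @comp_n L M (proj1_sig (fst x)) tau (srt (snd x)) (a (snd x)) : dom M (ws srt x)).
      apply (Phi_forth (wc := wc)).
      intros chi [[k Hk] [phi ->]].
      apply sat_Sig_iff. simpl.
      assert (Ech : forall j, j <= n -> chain (pair_env p wc) j = apply_tup (comp_n j tau) a).
      { intros j Hj. apply functional_extensionality_dep. intros i.
        destruct (Nat.eq_dec j 0) as [->|Hj0].
        - rewrite chain0. reflexivity.
        - destruct (lt_dec j n) as [Hjn|Hjn].
          + rewrite (chain_mid p wc Hjn) by lia. reflexivity.
          + assert (j = n) by lia. subst j. rewrite chain_ge by lia. unfold p. simpl. unfold apply_tup. apply Hsig. }
      rewrite !Ech by lia.
      replace (pair_env (apply_tup (comp_n (S k) tau) a) (apply_tup (comp_n k tau) a))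
        with (aenv (comp_n k tau) (pair_env (apply_tup (tau k) a) a)).
      * rewrite sat_aut; [tauto|]. apply comp_n_aut. intros j Hj. apply (Htau j). lia.
      * apply functional_extensionality_dep. intros [i|i]; reflexivity.
  -
    intros [Hs [e [He HPhi]]].
    set (p := phi_env (apply_tup sigma a) a e).
    destruct (@realize L M K Hsat _ _ _ _ p (card_PVW Hn HN HI) (@Sig L n I srt) (Phi_back HPhi))
      as [w Hw].
    set (cc := chain (pair_env p w)).
    assert (F1 : forall k (Hk : k < n) phi, sat phi (pair_env (cc (S k)) (cc k)) <->
                    sat phi (pair_env (e (exist _ k Hk)) a)).
    { intros k Hk phi.
      pose proof (Hw _ (ex_intro _ (exist _ k Hk) (ex_intro _ phi eq_refl))) as H.
      apply sat_Sig_iff in H. exact H. }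
    assert (F2 : forall k, k < n -> forall phi0 : formula srt, sat phi0 a <-> sat phi0 (cc k)).
    { intros k Hk phi0. rewrite <- (sat_inr phi0 (cc (S k)) (cc k)), (F1 k Hk).
      rewrite sat_inr. tauto. }
    assert (F0 : cc 0 = a).
    { apply functional_extensionality_dep. intros i. unfold cc. rewrite chain0. reflexivity. }
    assert (Fn : cc n = apply_tup sigma a).
    { apply functional_extensionality_dep. intros i. unfold cc. rewrite chain_ge by lia. reflexivity. }
    assert (HP : forall k, exists P : autfun M, is_aut P /\ (k <= n -> apply_tup P a = cc k) /\
                   (k = 0 -> forall s x, P s x = x) /\ (k = n -> forall s x, P s x = sigma s x)).
    { intros k. destruct (Nat.eq_dec k 0) as [->|Hk0].
      - exists (@idf L M). split; [apply is_aut_id|]. split; [|split]; try (intros; reflexivity || lia).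
        intros _. rewrite F0. reflexivity.
      - destruct (Nat.eq_dec k n) as [->|Hkn].
        + exists sigma. split; auto. split; [|split]; try (intros; reflexivity || lia).
          intros _. rewrite Fn. reflexivity.
        + destruct (lt_dec k n) as [Hkl|Hkl].
          * destruct (Hhom I srt a (cc k) HI (F2 k Hkl)) as [P [HPa HPb]].
            exists P. split; auto. split; [|split]; try (intros; lia).
            intros _. apply functional_extensionality_dep. intros i. apply HPb.
          * exists (@idf L M). split; [apply is_aut_id|]. split; [|split]; intros; lia. }
    destruct (choose_fun HP) as [Pf HPf].
    assert (HQ : forall k, exists Q : autfun M, is_aut Q /\ (forall s x, Q s (Pf k s x) = x) /\
                   (forall s x, Pf k s (Q s x) = x)).
    { intros k. apply aut_inv_ex. apply (HPf k). }
    destruct (choose_fun HQ) as [Qf HQf].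
    set (tau := fun k => compf (Qf k) (Pf (S k))).
    exists tau. split.
    + intros k Hk. split.
      * apply is_aut_comp; [apply (HQf k)|apply (HPf (S k))].
      * intros phi Hphi.
        assert (E1 : apply_tup (tau k) a = apply_tup (Qf k) (cc (S k))).
        { unfold tau, compf, apply_tup. rewrite <- (proj1 (proj2 (HPf (S k)))) by lia. reflexivity. }
        assert (E2 : a = apply_tup (Qf k) (cc k)).
        { rewrite <- (proj1 (proj2 (HPf k))) by lia. apply functional_extensionality_dep. intros i.
          unfold apply_tup. symmetry. apply (HQf k). }
        rewrite E1.
        replace (pair_env (apply_tup (Qf k) (cc (S k))) a) with (aenv (Qf k) (pair_env (cc (S k)) (cc k)))
          by (rewrite aenv_pair, <- E2; reflexivity).
        apply (sat_aut (proj1 (HQf k))).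
        apply (F1 k Hk). apply (He (exist _ k Hk)). exact Hphi.
    + assert (C : forall k s x, comp_n k tau (s:=s) x = Pf k s x).
      { induction k as [|k IH]; intros s x.
        - simpl. symmetry. apply (HPf 0); auto.
        - simpl. rewrite IH. unfold tau, compf. apply (HQf k). }
      intros s x. rewrite C. symmetry. apply (HPf n); auto.
Qed.
End Main.

Theorem lemma5p7 (L : signature) (K : Type) (M : structure L)
  (HM : monster K M) :
  (* (i) *)
  (forall (I J : Type) (sI : I -> sort L) (sJ : J -> sort L)
     (pi : ptype (sum_sort sI sJ)) (a : tup M sI) (b : tup M sJ),
     lt_card I K -> lt_card J K ->
     set_eq (inv_set (A_pi pi a b)) (A_pi (swap_ptype pi) b a)) /\
  (* (ii) *)
  (forall n : nat, 2 <= n ->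
   forall (I : Type) (srt : I -> sort L), lt_card I K ->
   exists Phi : ptype (phi_sort srt (n:=n)),
   forall (pis : nat -> ptype (sum_sort srt srt)) (a : tup M srt),
     set_eq (prod_n n (fun k => A_pi (pis k) a a))
       (A_rel (fun c d =>
                 exists e : {k : nat | k < n} -> tup M srt,
                   (forall k, sat_type (pis (proj1_sig k)) (pair_env (e k) d)) /\
                   sat_type Phi (phi_env c d e))
              a a)).
Proof.
  split.
  - intros I J sI sJ pi a b _ _. apply part_i.
  - apply (part_ii HM).
Qed.
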